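(* Let $N>0$, $m>0$, $F>0$, $\alpha>0$, $w>0$, $\tau\in(0,1)$, $g\geq 0$, $L_g\geq 0$, and define \[ L=\frac{N\left[(1-\tau)(mL_g+\alpha F)+(mg+F)mN\right]}{\alpha+(Nm-\alpha)\tau},\qquad q=\frac{(1-\tau)(L+L_g-\alpha g)}{\left(Nm+\alpha(1-\tau)\right)(L+L_g)}, \] \[ p=\frac{L+L_g}{L+L_g-\alpha g}\left(mw+\frac{\alpha(1-\tau)w}{N}\right). \] If $Nm>\alpha$, then $p-mw>0$.
   Context: These are the symmetric-equilibrium quantities of a monopolistic-competition general equilibrium model: $N$ is the measure of firms, $m$ and $F$ the marginal and fixed labor inputs, $\alpha$ the CARA utility parameter, $w$ the nominal wage, $\tau$ the income tax rate, $g$ the government purchase of each variety, $L_g$ government employment, $L$ private employment, $q$ per-capita consumption of each variety, $p$ the common price (so $mw$ is marginal cost). *)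

(* Defs.v *)
From Stdlib Require Import Reals Lra.
Open Scope R_scope.

Definition L_eq (N m F alpha tau g Lg : R) : R :=
  N * ((1 - tau) * (m * Lg + alpha * F) + (m * g + F) * m * N)
  / (alpha + (N * m - alpha) * tau).

Definition q_eq (N m F alpha tau g Lg : R) : R :=
  let L := L_eq N m F alpha tau g Lg in
  (1 - tau) * (L + Lg - alpha * g) / ((N * m + alpha * (1 - tau)) * (L + Lg)).

Definition p_eq (N m F alpha w tau g Lg : R) : R :=
  let L := L_eq N m F alpha tau g Lg in
  (L + Lg) / (L + Lg - alpha * g) * (m * w + alpha * (1 - tau) * w / N).

(* Main.v *)
Require Import Defs.
From Stdlib Require Import Reals Lra Psatz.
Open Scope R_scope.

Theorem proposition3 (N m F alpha w tau g Lg : R)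
  (hN : 0 < N) (hm : 0 < m) (hF : 0 < F) (halpha : 0 < alpha) (hw : 0 < w)
  (htau0 : 0 < tau) (htau1 : tau < 1) (hg : 0 <= g) (hLg : 0 <= Lg)
  (hNm : N * m > alpha) :
  p_eq N m F alpha w tau g Lg - m * w > 0.
Proof.
  unfold p_eq.
  set (D := alpha + (N * m - alpha) * tau).
  assert (hD : 0 < D) by (unfold D; nra).
  set (L := L_eq N m F alpha tau g Lg).
  assert (hLD : L * D = N * ((1 - tau) * (m * Lg + alpha * F) + (m * g + F) * m * N)).
  { unfold L, L_eq. fold D. field. lra. }
  assert (hX : L - alpha * g > 0).
  { assert (H : (L - alpha * g) * D > 0).
    { assert (alpha * g * (1 - tau) * alpha <= alpha * g * (1-tau) * (N*m)).
      { apply Rmult_le_compat_l; [|lra]. apply Rmult_le_pos; [|lra]. nra. }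
      assert (alpha * g * (N*m) <= N*m*g*(N*m)).
      { apply Rmult_le_compat_r; [nra|]. nra. }
      assert (0 < N*N*m*F) by (repeat apply Rmult_lt_0_compat; lra).
      assert (0 <= N*(1-tau)*(m*Lg)) by (apply Rmult_le_pos; [nra|nra]).
      assert (0 <= N*(1-tau)*(alpha*F)) by (apply Rmult_le_pos; [nra|nra]).
      replace ((L - alpha*g)*D) with (L*D - alpha*g*D) by ring.
      rewrite hLD. unfold D. nra. }
    destruct (Rlt_or_le 0 (L - alpha*g)) as [h|h]; [lra|].
    exfalso. assert ((L - alpha*g)*D <= 0) by nra. lra. }
  set (X := L + Lg - alpha * g).
  assert (hX' : X > 0) by (unfold X; lra).
  set (c := m * w + alpha * (1 - tau) * w / N).
  assert (hc : c > m * w).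
  { unfold c. assert (0 < alpha * (1 - tau) * w / N).
    { apply Rdiv_lt_0_compat; [|lra]. repeat apply Rmult_lt_0_compat; lra. }
    lra. }
  assert (hr : (L + Lg) / X >= 1).
  { apply Rle_ge. apply (Rmult_le_reg_r X); [lra|].
    unfold Rdiv. rewrite Rmult_assoc, Rinv_l by lra. unfold X; nra. }
  assert (0 < m * w) by nra.
  nra.
Qed.
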